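(* Let $A$ be the filtered boundary matrix of a Morse decomposition with respect to an admissible enumeration $\sigma_1,\dots,\sigma_n$ (see context), and let $A_{out}$ be the matrix obtained after the column-reduction phase of ConMat. Then $A_{out}$ satisfies: (R1) the map $J_h(A_{out})\ni j\mapsto\mathrm{low}_{A_{out}}(j)\in J_t(A_{out})$ is a well-defined bijection; (R2) $J_h(A_{out})\cap J_t(A_{out})=\emptyset$; (R3) if $A_{out}[i,j]=1$ for some $i\le\mathrm{low}_{A_{out}}(j)$, then there is no $s\in J_h(A_{out})$ with $s<j$ and $\mathrm{low}_{A_{out}}(s)=i$.
   Context: $K$ is a finite simplicial complex ($\tau\le\sigma$: $\tau$ is a face of $\sigma$; $\mathrm{cl}(\sigma)=\{\tau:\tau\le\sigma\}$). A multivector field $\mathcal V$ on $K$ is a partition of $K$ into convex sets $V$ (if $\sigma,\tau\in V$ and $\sigma\le\mu\le\tau$ then $\mu\in V$); $[\sigma]_{\mathcal V}$ is the part containing $\sigma$, $F_{\mathcal V}(\sigma)=[\sigma]_{\mathcal V}\cup\mathrm{cl}(\sigma)$, and a path is a sequence $\sigma_1,\dots,\sigma_r$ with $\sigma_k\in F_{\mathcal V}(\sigma_{k-1})$. A Morse decomposition indexed by a finite poset $(P,\le_P)$ is a partition $K=\bigsqcup_{p\in P}M_p$ such that every path from $M_p$ to $M_q$ has $q\le_P p$; $[\sigma]_P$ is the $p$ with $\sigma\in M_p$. An admissible enumeration is $\sigma_1,\dots,\sigma_n$ of all simplices of $K$ such that (a) for some linear extension $\le_{lin}$ of $\le_P$,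 $i\le j\Rightarrow[\sigma_i]_P\le_{lin}[\sigma_j]_P$; (b) if $\sigma_i$ is a proper face of $\sigma_j$ then $i<j$. The filtered boundary matrix $A$ is the $n\times n$ $\mathbb Z_2$-matrix with $A[i,j]=1$ iff $\sigma_i$ is a codimension-one face of $\sigma_j$; row/column $i$ represents $\sigma_i$. For a nonzero column $j$ of such a matrix $B$, $\mathrm{low}_B(j)$ is the largest $i$ with $B[i,j]=1$. Column (and row) $j$ is homogeneous if nonzero and $\sigma_j$, $\sigma_{\mathrm{low}_B(j)}$ are in the same Morse set; then index $\mathrm{low}_B(j)$ is targetable. $J_h(B)$, $J_t(B)$: sets of homogeneous, targetable indices. ConMat reduction phase on $A$ (in place): for $j=1,\dots,n$: for $i=\mathrm{low}_A(j)$ down to $1$: if $A[i,j]=1$ and some column $s<j$ of the current matrix is homogeneous with $\mathrm{low}_A(s)=i$, add column $s$ to column $j$ (mod 2). $A_{out}$ is the matrix after the outer loop. *)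

(* Defs.v *)
From HB Require Import structures.
From mathcomp Require Import all_boot all_order all_algebra.
Set Implicit Arguments. Unset Strict Implicit. Unset Printing Implicit Defensive.
Import GRing.Theory.
Local Open Scope ring_scope.

Section Defs.
Variable V : finType.

Definition simplicial_complex (K : {set {set V}}) : Prop :=
  set0 \notin K /\
  (forall sigma tau : {set V}, sigma \in K -> tau \subset sigma ->
       tau != set0 -> tau \in K).

Definition cl (K : {set {set V}}) (sigma : {set V}) : {set {set V}} :=
  [set tau in K | tau \subset sigma].

Definition codim1_face (tau sigma : {set V}) : bool :=
  (tau \subset sigma) && (#|sigma| == #|tau|.+1)%N.

Definition convex_in (W : {set {set V}}) : Prop :=
  forall sigma tau mu : {set V}, sigma \in W -> tau \in W ->
    sigma \subset mu -> mu \subset tau -> mu \in W.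

Definition multivector_field (K : {set {set V}}) (Vs : {set {set {set V}}})
  : Prop := partition Vs K /\ (forall W, W \in Vs -> convex_in W).

Definition Fmv (K : {set {set V}}) (Vs : {set {set {set V}}}) (sigma : {set V})
  : {set {set V}} := pblock Vs sigma :|: cl K sigma.

Definition mv_path (K : {set {set V}}) (Vs : {set {set {set V}}}) (x : {set V}) (s : seq {set V}) : bool :=
  path (fun a b => b \in Fmv K Vs a) x s.

Definition partial_order (P : finType) (le : rel P) : Prop :=
  reflexive le /\ antisymmetric le /\ transitive le.

(** Morse decomposition indexed by the poset (P, leP): the Morse set of a
    simplex sigma in K is M_{mp sigma}; i.e. M_p = [set sigma in K | mp sigma == p]. *)
Definition morse_decomposition (K : {set {set V}}) (Vs : {set {set {set V}}}) (P : finType) (leP : rel P)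
    (mp : {set V} -> P) : Prop :=
  forall (x : {set V}) (s : seq {set V}),
    x \in K -> mv_path K Vs x s -> leP (mp (last x s)) (mp x).

Definition linear_extension (P : finType) (leP lelin : rel P) : Prop :=
  partial_order lelin /\ total lelin /\ (forall p q, leP p q -> lelin p q).

(** enumeration e : 'I_n -> simplices; index 0-based (i stands for sigma_{i+1}) *)
Definition admissible_enumeration (K : {set {set V}}) (P : finType) (leP : rel P)
    (mp : {set V} -> P) (n : nat) (e : 'I_n -> {set V}) : Prop :=
  [/\ (forall i, e i \in K), injective e,
      (forall sigma, sigma \in K -> exists i, e i = sigma),
      (exists lelin : rel P, linear_extension leP lelin /\
         (forall i j : 'I_n, (i <= j)%N -> lelin (mp (e i)) (mp (e j))))
    & (forall i j : 'I_n, e i \proper e j -> (i < j)%N)].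

Variable n : nat.
Variable e : 'I_n -> {set V}.
Variable P : finType.
Variable mp : {set V} -> P.

Definition boundary_matrix : 'M['F_2]_n :=
  \matrix_(i, j) (if codim1_face (e i) (e j) then 1 else 0).

Definition low (B : 'M['F_2]_n) (j : 'I_n) : option 'I_n :=
  [pick i : 'I_n | (B i j != 0) && [forall k : 'I_n, (i < k)%N ==> (B k j == 0)]].

Definition homogeneous (B : 'M['F_2]_n) (j : 'I_n) : bool :=
  if low B j is Some i then mp (e i) == mp (e j) else false.

Definition Jh (B : 'M['F_2]_n) : {set 'I_n} := [set j | homogeneous B j].
Definition Jt (B : 'M['F_2]_n) : {set 'I_n} :=
  [set i | [exists j, homogeneous B j && (low B j == Some i)]].

Definition add_col (B : 'M['F_2]_n) (s j : 'I_n) : 'M['F_2]_n :=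
  \matrix_(a, b) (if b == j then B a j + B a s else B a b).

Definition inner_step (j : 'I_n) (B : 'M['F_2]_n) (i : 'I_n) : 'M['F_2]_n :=
  if B i j == 1 then
    if [pick s : 'I_n | (s < j)%N && homogeneous B s && (low B s == Some i)]
       is Some s then add_col B s j else B
  else B.

Definition reduce_column (B : 'M['F_2]_n) (j : 'I_n) : 'M['F_2]_n :=
  if low B j is Some l then
    foldl (inner_step j) B [seq i <- rev (enum 'I_n) | (nat_of_ord i <= nat_of_ord l)%N]
  else B.

Definition conmat_reduction (A : 'M['F_2]_n) : 'M['F_2]_n :=
  foldl reduce_column A (enum 'I_n).

End Defs.

(* Main.v *)
Require Import Defs.
From HB Require Import structures.
From mathcomp Require Import all_boot all_order all_algebra.
Import GRing.Theory.
Local Open Scope ring_scope.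

Lemma f2c (x : 'F_2) : x = 0 \/ x = 1.
Proof. case: x => m Hm. move: Hm. rewrite /=. case: m => [|[|m]] Hm.
  left; exact: val_inj. right; exact: val_inj. by []. Qed.
Lemma f2_11 : (1 : 'F_2) + 1 = 0. Proof. apply: val_inj. by []. Qed.
Lemma f2_xx (x : 'F_2) : x + x = 0. Proof. by case: (f2c x) => ->; rewrite ?addr0 ?f2_11. Qed.
Lemma f2_nz (x : 'F_2) : x != 0 -> x = 1. Proof. by case: (f2c x) => ->; rewrite ?eqxx. Qed.
Lemma f2_n1 (x : 'F_2) : x != 1 -> x = 0. Proof. by case: (f2c x) => ->; rewrite ?eqxx. Qed.

Section S.
Variables (n : nat).
Implicit Types (B C : 'M['F_2]_n).

Lemma lowP B j :
  match low B j with
  | Some l => B l j != 0 /\ forall k : 'I_n, (l < k)%N -> B k j = 0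
  | None => forall k, B k j = 0 end.
Proof.
rewrite /low; case: pickP => [l /andP[H1 /forallP H2] | H].
  by split => // k lt; apply/eqP; exact: (implyP (H2 k) lt).
move=> k; apply/eqP; apply: contraT => Hk.
case: (@arg_maxnP _ k (fun i : 'I_n => B i j != 0) (fun i : 'I_n => nat_of_ord i) Hk) => i Hi Hmax.
have Hf : [forall k0 : 'I_n, (i < k0)%N ==> (B k0 j == 0)].
  apply/forallP => k'; apply/implyP => lt; apply: contraT => Hk'.
  by have := Hmax k' Hk'; rewrite /= leqNgt lt.
by have := H i; rewrite /= Hi Hf.
Qed.

Lemma low_nz {B j l} : low B j = Some l -> B l j = 1.
Proof. by move=> H; have := lowP B j; rewrite H => -[/f2_nz]. Qed.

Lemma low_above {B j l} {k : 'I_n} : low B j = Some l -> (l < k)%N -> B k j = 0.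
Proof. by move=> H; have := lowP B j; rewrite H => -[_]; apply. Qed.

Lemma nz_low {B j r} : B r j != 0 -> exists2 l, low B j = Some l & (r <= l)%N.
Proof.
have := lowP B j; case: (low B j) => [l [H1 H2]|H] Hr; last by rewrite H eqxx in Hr.
exists l => //; rewrite leqNgt; apply/negP => lt; by rewrite H2 ?eqxx in Hr.
Qed.

Lemma low_ext {B C j} : (forall a, B a j = C a j) -> low B j = low C j.
Proof.
move=> H; rewrite /low; apply: eq_pick => i /=; rewrite H; congr (_ && _).
by apply: eq_forallb => k; rewrite H.
Qed.

Variables (V : finType) (e : 'I_n -> {set V}) (P : finType) (mp : {set V} -> P).

Lemma homog_ext {B C j} : (forall a, B a j = C a j) ->
  homogeneous e mp B j = homogeneous e mp C j.
Proof. by move=> H; rewrite /homogeneous (low_ext H). Qed.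

Definition noS B (j r : 'I_n) :=
  ~ exists s : 'I_n, [/\ (s < j)%N, homogeneous e mp B s & low B s = Some r].

Lemma inner_fold j B L C :
  sorted (fun a b : 'I_n => (b < a)%N) L ->
  (forall x y : 'I_n, x \in L -> (y < x)%N -> y \in L) ->
  (forall b, b != j -> forall a, C a b = B a b) ->
  (forall r, C r j = 1 -> r \in L \/ noS B j r) ->
  (forall b, b != j -> forall a, foldl (inner_step e mp j) C L a b = B a b) /\
  (forall r, foldl (inner_step e mp j) C L r j = 1 -> noS B j r).
Proof.
elim: L C => [|i L IH] C Hs Hc Hcol Hinv /=.
  by split => // r /Hinv [].
have Hlt : forall x, x \in L -> (x < i)%N.
  move=> x Hx; have Htr : transitive (fun a b : 'I_n => (b < a)%N).
    by move=> a b c H1 H2; apply: ltn_trans H2 H1.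
  by have := order_path_min Htr Hs => /allP /(_ x Hx).
have HsL : sorted (fun a b : 'I_n => (b < a)%N) L by exact: path_sorted Hs.
have HcL : forall x y : 'I_n, x \in L -> (y < x)%N -> y \in L.
  move=> x y Hx Hy; have := Hc x y; rewrite inE Hx orbT => /(_ isT Hy).
  rewrite inE => /orP[/eqP Eyi|//]; have := Hlt x Hx.
  by rewrite -Eyi => /(ltn_trans Hy); rewrite ltnn.
have Hbelow : forall r : 'I_n, (r < i)%N -> r \in L.
  move=> r Hr; have := Hc i r; rewrite inE eqxx => /(_ isT Hr).
  by rewrite inE => /orP[/eqP E|//]; rewrite E ltnn in Hr.
suff [H1 H2] : (forall b, b != j -> forall a, inner_step e mp j C i a b = B a b) /\
  (forall r, inner_step e mp j C i r j = 1 -> r \in L \/ noS B j r).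
  by apply: IH.
rewrite /inner_step.
case: ifP => [/eqP Hij|Hij].
  case: pickP => [s /andP[/andP[Hsj Hh] /eqP Hl]|Hn].
    split.
      by move=> b Hb a; rewrite mxE (negbTE Hb) Hcol.
    move=> r; rewrite mxE eqxx.
    case: (ltngtP r i) => Hri.
    - by move=> _; left; apply: Hbelow.
    - rewrite (low_above Hl Hri) addr0 => /Hinv [|HH]; last by right.
      by rewrite inE => /orP[/eqP E|]; [rewrite E ltnn in Hri|left].
    - have -> : r = i by exact: val_inj.
      by rewrite Hij (low_nz Hl) f2_11 => /esym/eqP; rewrite oner_eq0.
  split => // r Hr; case: (Hinv r Hr) => [|]; last by right.
  rewrite inE => /orP[/eqP E|]; last by left.
  right; rewrite E => -[s [Hsj Hh Hl]]; move: (Hn s); rewrite Hsj /=.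
  have Hsneq : s != j by rewrite neq_ltn Hsj.
  have Ecol : forall a, C a s = B a s by move=> a; rewrite Hcol.
  by rewrite (homog_ext Ecol) Hh (low_ext Ecol) Hl eqxx.
split => // r Hr; case: (Hinv r Hr) => [|]; last by right.
rewrite inE => /orP[/eqP E|]; last by left.
by rewrite -E Hr eqxx in Hij.
Qed.

Lemma reduce_good B j :
  (forall b, b != j -> forall a, reduce_column e mp B j a b = B a b) /\
  (forall r, reduce_column e mp B j r j = 1 -> noS B j r).
Proof.
rewrite /reduce_column; have := lowP B j; case: (low B j) => [l [Hl1 Hl2] | Hz]; last first.
  by split => // r; rewrite Hz => /esym/eqP; rewrite oner_eq0.
have Hmem : forall x : 'I_n, (x \in [seq i <- rev (enum 'I_n) | (nat_of_ord i <= nat_of_ord l)%N]) = (x <= l)%N.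
  by move=> x; rewrite mem_filter mem_rev mem_enum andbT.
apply: inner_fold => //.
- apply: sorted_filter; first by move=> a b c H1 H2; apply: ltn_trans H2 H1.
  rewrite rev_sorted.
  have := iota_ltn_sorted 0 n; rewrite -val_enum_ord sorted_map.
  by apply: sub_sorted.
- by move=> x y; rewrite !Hmem => Hx Hy; apply: leq_trans (ltnW Hy) Hx.
- move=> r Hr; left; rewrite Hmem leqNgt; apply/negP => lt.
  by move: Hr; rewrite Hl2 // => /esym/eqP; rewrite oner_eq0.
Qed.

Definition good B (j : 'I_n) := forall r, B r j = 1 -> noS B j r.

Lemma outer_fold L C :
  sorted (fun a b : 'I_n => (a < b)%N) L ->
  (forall x y : 'I_n, x \in L -> (x < y)%N -> y \in L) ->
  (forall j, j \notin L -> good C j) ->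
  forall j, good (foldl (reduce_column e mp) C L) j.
Proof.
elim: L C => [|i L IH] C Hs Hc Hg /=; first by move=> j; apply: Hg.
have Hlt : forall x, x \in L -> (i < x)%N.
  move=> x Hx; have Htr : transitive (fun a b : 'I_n => (a < b)%N).
    by move=> a b c H1 H2; apply: ltn_trans H1 H2.
  by have := order_path_min Htr Hs => /allP /(_ x Hx).
apply: IH; first exact: path_sorted Hs.
  move=> x y Hx Hy; have := Hc x y; rewrite inE Hx orbT => /(_ isT Hy).
  rewrite inE => /orP[/eqP Eyi|//]; have := Hlt x Hx.
  by rewrite -Eyi => /(ltn_trans Hy); rewrite ltnn.
have [Hcol Hred] := reduce_good C i.
move=> j Hj.
have Esm : forall s : 'I_n, (s < j)%N -> (j <= i)%N -> forall a, reduce_column e mp C i a s = C a s.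
  move=> s Hs1 Hs2 a; apply: Hcol; rewrite neq_ltn; apply/orP; left.
  exact: leq_trans Hs1 Hs2.
have Hji : (j <= i)%N.
  rewrite leqNgt; apply/negP => lt; have := Hc i j; rewrite inE eqxx => /(_ isT lt).
  by rewrite inE (negbTE Hj) orbF => /eqP E; rewrite E ltnn in lt.
case: (eqVneq j i) => [Eji|Hne].
  subst j.
  move=> r /Hred Hn [s [Hsj Hh Hl]]; apply: Hn; exists s; split => //.
    by rewrite -(homog_ext (Esm s Hsj (leqnn _))).
  by rewrite -(low_ext (Esm s Hsj (leqnn _))).
have Hj' : j \notin i :: L by rewrite inE negb_or Hne.
move=> r; rewrite Hcol // => /(Hg j Hj') Hn [s [Hsj Hh Hl]]; apply: Hn; exists s; split => //.
  by rewrite -(homog_ext (Esm s Hsj Hji)).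
by rewrite -(low_ext (Esm s Hsj Hji)).
Qed.

Lemma conmat_good A j : good (conmat_reduction e mp A) j.
Proof.
apply: outer_fold => //.
- have := iota_ltn_sorted 0 n; rewrite -val_enum_ord sorted_map.
  by apply: sub_sorted.
- by move=> x y _ _; rewrite mem_enum.
- by move=> j0; rewrite mem_enum.
Qed.

End S.
Arguments good {n V} e {P} mp B j.
Arguments noS {n V} e {P} mp B j r.
Arguments low_nz {n B j l}.
Arguments nz_low {n B j r}.
Arguments low_above {n B j l k}.
Arguments low_ext {n B C j}.
Arguments conmat_good {n V} e {P} mp A j.

Section S2.
Variables (n : nat).
Implicit Types (B C : 'M['F_2]_n).

Definition UT (M : 'M['F_2]_n) := forall a b : 'I_n, (b <= a)%N -> M a b = (a == b)%:R.

Lemma UT_mul M N : UT M -> UT N -> UT (M *m N).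
Proof.
move=> HM HN a b Hba; rewrite mxE (bigD1 a) //= HM // HN // eqxx mul1r.
rewrite big1 ?addr0 // => c Hca.
case: (ltngtP c a) => H.
- by rewrite HM ?(ltnW H) // eq_sym (negbTE Hca) mul0r.
- rewrite (HN c b) ?(leq_trans Hba (ltnW H)) //.
  have /negbTE -> : c != b.
    by apply/negP => /eqP E; move: H; rewrite E ltnNge Hba.
  by rewrite mulr0.
- have E : c = a by exact: val_inj.
  by rewrite E eqxx in Hca.
Qed.

Lemma UT1 : UT 1%:M.
Proof. by move=> a b _; rewrite mxE. Qed.

Definition INV (A B : 'M['F_2]_n) :=
  exists V1 W, [/\ UT V1, UT W, B = A *m V1 & A = B *m W].

Lemma add_colE B (s j : 'I_n) : add_col B s j = B *m (1%:M + delta_mx s j).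
Proof.
apply/matrixP => a b; rewrite mulmxDr mulmx1 !mxE.
rewrite (bigD1 s) //= big1 ?addr0; last first.
  by move=> c Hc; rewrite mxE (negbTE Hc) /= mulr0.
rewrite mxE eqxx /=.
by case: eqP => [->|_]; rewrite ?mulr1 ?mulr0 ?addr0.
Qed.

Lemma INV_add A B (s j : 'I_n) : (s < j)%N -> INV A B -> INV A (add_col B s j).
Proof.
move=> Hsj [V1 [W [HV HW EB EA]]].
set E := (1%:M + delta_mx s j : 'M['F_2]_n).
have Hsn : s != j by rewrite neq_ltn Hsj.
have HE : UT E.
  move=> a b Hba; rewrite !mxE.
  have -> : (a == s) && (b == j) = false.
    apply/negP => /andP[/eqP Ea /eqP Eb]; move: Hba; rewrite Ea Eb leqNgt Hsj.
    by [].
  by rewrite addr0.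
have EE : E *m E = 1%:M.
  have Hjs : (j == s) = false by rewrite eq_sym (negbTE Hsn).
  rewrite /E mulmxDl !mulmxDr !mul1mx mulmx1 mul_delta_mx_cond Hjs mulr0n.
  apply/matrixP => a b; by rewrite !mxE addr0 -addrA f2_xx addr0.
exists (V1 *m E), (E *m W); split.
- exact: UT_mul.
- exact: UT_mul.
- by rewrite add_colE EB mulmxA.
- by rewrite add_colE -mulmxA (mulmxA E) EE mul1mx.
Qed.

Variables (V : finType) (e : 'I_n -> {set V}) (P : finType) (mp : {set V} -> P).

Lemma INV_conmat A : INV A (conmat_reduction e mp A).
Proof.
have H0 : INV A A by exists 1%:M, 1%:M; split; rewrite ?mulmx1 //; exact: UT1.
rewrite /conmat_reduction; move: H0.
have : forall L B, INV A B -> INV A (foldl (reduce_column e mp) B L); last by apply.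
elim => [|j L IH] B HB //=.
apply: IH; rewrite /reduce_column; case: (low B j) => // l.
move: HB; have : forall L' C, INV A C -> INV A (foldl (inner_step e mp j) C L'); last by apply.
elim => [|i L' IH'] C HC //=.
apply: IH'; rewrite /inner_step; case: ifP => // _.
case: pickP => // s /andP[/andP[Hsj _] _].
exact: INV_add.
Qed.

End S2.
Arguments UT {n}.
Arguments INV {n}.
Arguments INV_conmat {n V} e {P} mp A.

Section S3.
Variables (V : finType) (n : nat) (e : 'I_n -> {set V}).

Lemma bd_upper : (forall i j : 'I_n, e i \proper e j -> (i < j)%N) ->
  forall r c, boundary_matrix e r c != 0 -> (r < c)%N.
Proof.
move=> Hp r c; rewrite mxE /codim1_face; case: andP => [[Hs /eqP Hc]|]; last by rewrite eqxx.
move=> _; apply: Hp; rewrite properEcard Hs Hc /=; exact: ltnSn.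
Qed.

Lemma dd0 (K : {set {set V}}) : simplicial_complex K -> (forall i, e i \in K) ->
  injective e -> (forall sigma, sigma \in K -> exists i, e i = sigma) ->
  boundary_matrix e *m boundary_matrix e = 0.
Proof.
move=> [HK0 HK] HeK Hinj Hsurj; apply/matrixP => a c; rewrite !mxE.
under eq_bigr => b _ do rewrite !mxE.
case: (boolP ((e a \subset e c) && (#|e c| == #|e a|.+2))) => [/andP[Hac /eqP Hcard]|Hno]; last first.
  rewrite big1 // => b _; rewrite /codim1_face.
  case: andP => [[Hab /eqP Hb1]|]; last by rewrite mul0r.
  case: andP => [[Hbc /eqP Hb2]|]; last by rewrite mulr0.
  by move: Hno; rewrite (subset_trans Hab Hbc) Hb2 Hb1 eqxx.
have Hd : #|e c :\: e a| == 2%N by rewrite cardsDS // Hcard -addn2 addKn.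
case/cards2P: Hd => x [y [Hxy Hd]].
have Hx : x \in e c :\: e a by rewrite Hd !inE eqxx.
have Hy : y \in e c :\: e a by rewrite Hd !inE eqxx orbT.
have mkT : forall z, z \in e c :\: e a -> exists b, e b = z |: e a.
  move=> z Hz; apply: Hsurj; apply: (HK (e c)) => //.
    by rewrite subUset sub1set Hac andbT; move: Hz; rewrite inE => /andP[].
  by apply/set0Pn; exists z; rewrite !inE eqxx.
have [bx Ebx] := mkT x Hx; have [by_ Eby] := mkT y Hy.
have Hchar : forall b, (codim1_face (e a) (e b) && codim1_face (e b) (e c)) = (b == bx) || (b == by_).
  move=> b; apply/idP/idP.
  - case/andP => /andP[Hab /eqP Hb1] /andP[Hbc /eqP Hb2].
    have : #|e b :\: e a| == 1%N by rewrite cardsDS // Hb1 -addn1 addKn.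
    case/cards1P => z Hz.
    have Hzb : z \in e b :\: e a by rewrite Hz inE.
    have Ebz : e b = z |: e a.
      apply/setP => w; rewrite !inE; case: (boolP (w \in e a)) => Hw.
        by rewrite orbT (subsetP Hab).
      rewrite orbF; apply/idP/idP => [Hwb|/eqP ->].
        have : w \in e b :\: e a by rewrite inE Hw Hwb.
        by rewrite Hz inE.
      by move: Hzb; rewrite inE => /andP[].
    have Hzc : z \in e c :\: e a.
      by move: Hzb; rewrite !inE => /andP[-> Hzb']; rewrite (subsetP Hbc).
    move: Hzc; rewrite Hd !inE => /orP[/eqP Ez|/eqP Ez].
      by rewrite (Hinj b bx) ?eqxx // Ebx Ebz Ez.
    by rewrite (Hinj b by_) ?eqxx ?orbT // Eby Ebz Ez.
  - have Hg : forall z, z \in e c :\: e a ->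
        codim1_face (e a) (z |: e a) && codim1_face (z |: e a) (e c).
      move=> z; rewrite inE => /andP[Hza Hzc]; rewrite /codim1_face subsetUr !cardsU1 Hza /=.
      by rewrite subUset sub1set Hzc Hac Hcard add1n !eqxx.
    by case/orP => /eqP ->; rewrite ?Ebx ?Eby; apply: Hg.
have Hterm : forall b, (if codim1_face (e a) (e b) then 1 else 0) *
    (if codim1_face (e b) (e c) then 1 else 0) = ((b == bx) || (b == by_))%:R :> 'F_2.
  move=> b; rewrite -Hchar.
  by case: (codim1_face (e a) (e b)); case: (codim1_face (e b) (e c)); rewrite ?mulr1 ?mulr0 ?mul0r.
rewrite (eq_bigr _ (fun b _ => Hterm b)).
have Hbxy : by_ != bx.
  apply/negP => /eqP E; move: Hx; rewrite inE => /andP[Hxa _].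
  have : x \in e bx by rewrite Ebx !inE eqxx.
  by rewrite -E Eby !inE (negbTE Hxa) orbF => /eqP Exy; rewrite Exy eqxx in Hxy.
rewrite (bigD1 bx) //= (bigD1 by_) /=; last by rewrite Hbxy.
rewrite big1; last by move=> b /andP[Hb1 Hb2]; rewrite (negbTE Hb1) (negbTE Hb2).
by rewrite eqxx /= eqxx orbT addr0 f2_11.
Qed.

End S3.

Section S4.
Variables (V : finType) (n : nat) (e : 'I_n -> {set V}) (P : finType) (mp : {set V} -> P).

Lemma homogP {R : 'M['F_2]_n} {m} :
  homogeneous e mp R m -> exists2 l, low R m = Some l & mp (e l) = mp (e m).
Proof. by rewrite /homogeneous; case: (low R m) => // l /eqP H; exists l. Qed.

Lemma good_inj (R : 'M['F_2]_n) : (forall j, good e mp R j) ->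
  forall m1 m2 l, homogeneous e mp R m1 -> homogeneous e mp R m2 ->
  low R m1 = Some l -> low R m2 = Some l -> m1 = m2.
Proof.
move=> Hg m1 m2 l H1 H2 L1 L2.
case: (ltngtP m1 m2) => H.
- by case: (Hg m2 l (low_nz L2)); exists m1.
- by case: (Hg m1 l (low_nz L1)); exists m2.
- exact: val_inj.
Qed.

Lemma R2core (A0 R : 'M['F_2]_n) (Hdd : A0 *m A0 = 0)
  (Hup : forall r c, A0 r c != 0 -> (r < c)%N)
  (Hinv : INV A0 R) (Hgood : forall j, good e mp R j)
  (Hsand : forall a b c : 'I_n, (a <= b)%N -> (b <= c)%N -> mp (e a) = mp (e c) -> mp (e b) = mp (e a))
  j k : homogeneous e mp R j -> low R k = Some j -> False.
Proof.
case: Hinv => V1 [W [UTV UTW ER EA]] Hj Hkj.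
have [i Hji Hbj] := homogP Hj.
have UT0 : forall (M : 'M['F_2]_n) (a b : 'I_n), UT M -> (b < a)%N -> M a b = 0.
  move=> M a b HM H; rewrite HM ?(ltnW H) //.
  by have /negbTE -> : a != b by rewrite neq_ltn H orbT.
have Rup : forall r m, R r m != 0 -> (r < m)%N.
  move=> r m; apply: contraR; rewrite -leqNgt => Hmr.
  rewrite ER mxE big1 // => b _.
  case: (boolP (A0 r b == 0)) => [/eqP ->|/Hup Hrb]; first by rewrite mul0r.
  by rewrite (UT0 _ b m UTV (leq_ltn_trans Hmr Hrb)) mulr0.
set u := fun b => R b k + V1 b j.
have Hu : forall b : 'I_n, (j <= b)%N -> u b = 0.
  move=> b; rewrite leq_eqVlt => /orP[/eqP E|H].
    have -> : b = j by exact: val_inj.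
    by rewrite /u (low_nz Hkj) UTV // eqxx f2_11.
  by rewrite /u (low_above Hkj H) (UT0 _ _ _ UTV H) addr0.
have C1 : forall a, R a j = \sum_b A0 a b * u b.
  move=> a; rewrite /u.
  under eq_bigr => b _ do rewrite mulrDr.
  rewrite big_split /=.
  have -> : \sum_b A0 a b * R b k = 0.
    have := congr1 (fun M : 'M['F_2]_n => M a k) (esym (mulmxA A0 A0 V1)).
    by rewrite Hdd mul0mx -ER !mxE.
  by rewrite add0r ER mxE.
set c := fun m => \sum_b W m b * u b.
have Hc : forall m : 'I_n, (j <= m)%N -> c m = 0.
  move=> m Hm; rewrite /c big1 // => b _.
  case: (leqP j b) => H; first by rewrite Hu // mulr0.
  by rewrite (UT0 _ _ _ UTW (leq_trans H Hm)) mul0r.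
have Hcj : forall m, c m != 0 -> (m < j)%N.
  by move=> m; apply: contraR; rewrite -leqNgt => /Hc ->; rewrite eqxx.
have C2 : forall a, R a j = \sum_m R a m * c m.
  move=> a; rewrite C1.
  have EA' : forall b, A0 a b = \sum_m R a m * W m b by move=> b; rewrite {1}EA mxE.
  under eq_bigr => b _ do rewrite EA' mulr_suml.
  rewrite exchange_big /=; apply: eq_bigr => m _.
  by rewrite /c mulr_sumr; apply: eq_bigr => b _; rewrite mulrA.
have nonH : forall m r, c m != 0 -> R r m != 0 -> mp (e r) = mp (e j) ->
    homogeneous e mp R m && (mp (e m) == mp (e j)).
  move=> m r Hcm Hrm Hr.
  have Hmj := Hcj m Hcm; have Hrm' := Rup r m Hrm.
  have [l' Hl' Hrl'] := nz_low Hrm.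
  have Hl'm : (l' < m)%N by apply: Rup; rewrite (low_nz Hl') oner_eq0.
  have Bm : mp (e m) = mp (e r) by apply: Hsand (ltnW Hrm') (ltnW Hmj) Hr.
  have Bl : mp (e l') = mp (e r) by apply: Hsand Hrl' (ltnW Hl'm) (esym Bm).
  by rewrite /homogeneous Hl' Bl Bm Hr !eqxx.
set Hp := fun m => (c m != 0) && homogeneous e mp R m && (mp (e m) == mp (e j)).
set lv := fun m => if low R m is Some l then nat_of_ord l else 0%N.
have [m0 Hm0] : exists m, R i m * c m != 0.
  case: (pickP (fun m => R i m * c m != 0)) => [m Hm|Hn]; first by exists m.
  have : R i j = 0 by rewrite C2 big1 // => m _; apply/eqP; have := Hn m; rewrite /= => /negbFE.
  by rewrite (low_nz Hji) => /eqP; rewrite oner_eq0.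
move: Hm0; rewrite mulf_eq0 negb_or => /andP[Him0 Hcm0].
have Hp0 : Hp m0 by rewrite /Hp Hcm0 /=; apply: (nonH m0 i Hcm0 Him0 Hbj).
case: (@arg_maxnP _ m0 Hp lv Hp0) => M HpM Hmax.
move: (HpM); rewrite /Hp => /andP[/andP[HcM HhM] /eqP HbM].
have [L HL HbL] := homogP HhM.
have HRL : R L j = 1.
  rewrite C2 (bigD1 M) //= (low_nz HL) mul1r (f2_nz _ HcM) big1 ?addr0 // => m HmM.
  apply/eqP; apply: contraR HmM => Hm; move: Hm; rewrite mulf_eq0 negb_or => /andP[HLm Hcm].
  have Hpm : Hp m by rewrite /Hp Hcm /=; apply: (nonH m L Hcm HLm); rewrite HbL HbM.
  have := Hmax m Hpm; rewrite /lv /= HL.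
  have [l'' Hl'' HLl''] := nz_low HLm; rewrite Hl'' => Hle.
  have El : l'' = L by apply: val_inj; apply/eqP; rewrite eqn_leq Hle HLl''.
  move: Hpm; rewrite /Hp => /andP[/andP[_ Hhm] _].
  rewrite El in Hl''.
  by rewrite (good_inj _ Hgood _ _ _ Hhm HhM Hl'' HL).
have HLi : (L <= i)%N.
  rewrite leqNgt; apply/negP => H; move: HRL; rewrite (low_above Hji H).
  by move/eqP; rewrite eq_sym oner_eq0.
have HiL : (i <= L)%N.
  have [l0 Hl0 Hil0] := nz_low Him0.
  have := Hmax m0 Hp0; rewrite /lv /= HL Hl0 => H; exact: leq_trans Hil0 H.
have EiL : L = i by apply: val_inj; apply/eqP; rewrite eqn_leq HLi HiL.
apply: (Hgood j i (low_nz Hji)); exists M; split => //.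
  exact: Hcj.
by rewrite HL EiL.
Qed.

End S4.

Theorem proposition4
  (V : finType) (K : {set {set V}}) (Vs : {set {set {set V}}})
  (P : finType) (leP : rel P) (mp : {set V} -> P)
  (n : nat) (e : 'I_n -> {set V}) :
  simplicial_complex K ->
  multivector_field K Vs ->
  partial_order leP ->
  morse_decomposition K Vs leP mp ->
  admissible_enumeration K leP mp e ->
  let Aout := conmat_reduction e mp (boundary_matrix e) in
  (* (R1) j |-> low(j) is a well-defined bijection J_h -> J_t *)
  ((forall j, j \in Jh e mp Aout ->
      exists2 i, low Aout j = Some i & i \in Jt e mp Aout) /\
   (forall j1 j2, j1 \in Jh e mp Aout -> j2 \in Jh e mp Aout ->
      low Aout j1 = low Aout j2 -> j1 = j2) /\
   (forall i, i \in Jt e mp Aout ->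
      exists2 j, j \in Jh e mp Aout & low Aout j = Some i)) /\
  (* (R2) *)
  (Jh e mp Aout :&: Jt e mp Aout = set0) /\
  (* (R3) *)
  (forall i j : 'I_n, Aout i j = 1 ->
     (exists2 l, low Aout j = Some l & (i <= l)%N) ->
     ~ (exists s : 'I_n, [/\ s \in Jh e mp Aout, (s < j)%N & low Aout s = Some i])).
Proof.
move=> HK Hmv Hpo Hmd [HeK Hinj Hsurj [lelin [[[Hrefl [Hanti Htr]] [Htot Hext]] Hmono]] Hprop] Aout.
have Hgood := conmat_good e mp (boundary_matrix e).
have Hsand : forall a b c : 'I_n, (a <= b)%N -> (b <= c)%N ->
    mp (e a) = mp (e c) -> mp (e b) = mp (e a).
  move=> a b c Hab Hbc Hac; apply: Hanti; apply/andP; split; last exact: Hmono.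
  by have := Hmono b c Hbc; rewrite -Hac.
have HR2 := @R2core V n e P mp _ _ (@dd0 V n e K HK HeK Hinj Hsurj) (@bd_upper V n e Hprop)
  (INV_conmat e mp (boundary_matrix e)) Hgood Hsand.
split; [split; [|split]|split].
- move=> j; rewrite inE => Hj; have [i Hi _] := homogP V n e P mp Hj.
  exists i => //; rewrite inE; apply/existsP; exists j; by rewrite Hj Hi eqxx.
- move=> j1 j2; rewrite !inE => H1 H2 E.
  have [l Hl _] := homogP V n e P mp H1.
  apply: (good_inj V n e P mp _ Hgood _ _ _ H1 H2 Hl); by rewrite -E.
- move=> i; rewrite inE => /existsP [j /andP[Hj /eqP Hl]].
  by exists j; rewrite ?inE.
- apply/setP => j; rewrite !inE; apply/negP => /andP[Hj /existsP [k /andP[_ /eqP Hk]]].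
  exact: HR2 Hj Hk.
- move=> i j Hij _ [s [Hs Hsj Hsl]]; apply: (Hgood j i Hij); exists s; split => //.
  by move: Hs; rewrite inE.
Qed.
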